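(* Let $(X,\tau)$ be a topological space and let $\mathcal{F}:\mathcal{O}(X)^{\mathrm{op}}\to\mathbf{Set}$ be a stonean sheaf with $\mathcal{F}(X)\neq\emptyset$. Then $\mathcal{F}(U)=\{f\restriction U: f\in\mathcal{F}(X)\}$ for all $U\in\mathcal{O}(X)$.
   Context: $\mathcal{O}(X)$ is the set of non-empty open subsets of $X$ ordered by inclusion; a presheaf is a functor $\mathcal{F}:\mathcal{O}(X)^{\mathrm{op}}\to\mathbf{Set}$ and $f\restriction U=\mathcal{F}(U\subseteq V)(f)$ for $f\in\mathcal{F}(V)$. A family $\{f_i\}$ with $f_i\in\mathcal{F}(U_i)$ is compatible if $f_i\restriction W=f_j\restriction W$ for all $i,j$ and non-empty open $W\subseteq U_i\cap U_j$; a collation on $U$ is $f\in\mathcal{F}(U)$ with $f\restriction W=f_i\restriction W$ for all $i$ and non-empty open $W\subseteq U\cap U_i$. $\{U_i\}$ is a dense covering of $U$ if every non-empty open $V\subseteq U$ meets some $U_i$ in a non-empty open set. $\mathcal{F}$ is a stonean sheaf if every compatible family indexed by a dense covering of $U$ has a unique collation on $U$. *)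

(* Defs.v *)
From HB Require Import structures.
From mathcomp Require Import all_boot.
From mathcomp Require Import boolp classical_sets topology.
Set Implicit Arguments. Unset Strict Implicit. Unset Printing Implicit Defensive.
Local Open Scope classical_set_scope.

Definition isO (X : topologicalType) (U : set X) : Prop := open U /\ U !=set0.

(* A presheaf O(X)^op -> Set: sections F U for U in O(X) (values on other
   subsets are irrelevant), restriction maps along inclusions, functorial. *)
Record presheaf (X : topologicalType) := Presheaf {
  sec : set X -> Type;
  res : forall U V : set X, U `<=` V -> sec V -> sec U;
  res_id : forall U (h : U `<=` U) (f : sec U), isO U -> res h f = f;
  res_comp : forall U V W (h1 : U `<=` V) (h2 : V `<=` W) (h3 : U `<=` W)
      (f : sec W), isO U -> isO V -> isO W -> res h1 (res h2 f) = res h3 f }.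

Section Defs.
Variables (X : topologicalType) (F : presheaf X).

Definition compatible (I : Type) (U : I -> set X) (f : forall i, sec F (U i)) :=
  forall i j (W : set X) (hi : W `<=` U i) (hj : W `<=` U j),
    isO W -> res hi (f i) = res hj (f j).

Definition collation (I : Type) (U : I -> set X) (f : forall i, sec F (U i))
    (V : set X) (g : sec F V) :=
  forall i (W : set X) (hV : W `<=` V) (hi : W `<=` U i),
    isO W -> res hV g = res hi (f i).

Definition dense_covering (I : Type) (U : I -> set X) (V : set X) :=
  (forall i, isO (U i)) /\
  forall W : set X, isO W -> W `<=` V -> exists i, isO (W `&` U i).

Definition stonean_sheaf :=
  forall (V : set X) (I : Type) (U : I -> set X) (f : forall i, sec F (U i)),
    isO V -> dense_covering U V -> compatible f ->
    exists g : sec F V, collation f g /\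
      forall g' : sec F V, collation f g' -> g' = g.
End Defs.

(* Main.v *)
Require Import Defs.
From mathcomp Require Import all_boot.
From mathcomp Require Import boolp classical_sets topology.
Local Open Scope classical_set_scope.

Theorem mainTheorem9 (X : topologicalType) (F : presheaf X) :
  stonean_sheaf F -> inhabited (sec F [set: X]) ->
  forall U : set X, isO U ->
    forall g : sec F U, exists (f : sec F [set: X]) (h : U `<=` [set: X]),
      res h f = g.
Proof.
move=> SS [f0] U UO g.
pose V := ~` closure U.
pose I := {b : bool | isO (if b then U else V)}.
pose Ui := fun i : I => if proj1_sig i then U else V.
have hVT : V `<=` [set: X] by [].
pose fi := fun i : I => match i return sec F (Ui i) with
  exist b _ => if b return sec F (if b then U else V) then g else res hVT f0 end.
have hUT : U `<=` [set: X] by [].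
have TO : isO [set: X].
  split; first exact: openT.
  by case: UO => _ [x _]; exists x.
have UV : forall x, U x -> V x -> False.
  by move=> x Ux; apply; apply: subset_closure.
have dc : dense_covering Ui [set: X].
  split; first by case.
  move=> W [WO [w Ww]] _.
  have [[x [Wx Ux]]|nWU] := pselect (exists x, W x /\ U x).
    have pU : isO (if true then U else V) by [].
    exists (exist _ true pU); split; first by apply: openI => //; case: UO.
    by exists x.
  have WV : W `<=` V.
    move=> x Wx cx.
    have nW : nbhs x W by apply: open_nbhs_nbhs.
    have [y [Uy Wy]] := cx W nW.
    by apply: nWU; exists y.
  have pV : isO (if false then U else V).
    split; first exact/closed_openC/closed_closure.
    by exists w; apply: WV.
  exists (exist _ false pV); split.
    by apply: openI => //; exact/closed_openC/closed_closure.
  by exists w; split => //; apply: WV.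
have cp : compatible fi.
  move=> [[] p] [[] q] W hi hj [_ [w Ww]] /=.
  - by rewrite (Prop_irrelevance hi hj).
  - by exfalso; apply: (UV w); [apply: hi|apply: hj].
  - by exfalso; apply: (UV w); [apply: hj|apply: hi].
  - by rewrite (Prop_irrelevance hi hj).
have [g' [cg _]] := SS [set: X] I Ui fi TO dc cp.
exists g', hUT.
have pU : isO (if true then U else V) by [].
have hUU : U `<=` Ui (exist _ true pU) by [].
rewrite (cg (exist _ true pU) U hUT hUU UO) /=.
exact: res_id.
Qed.
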